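(* Let $T>0$, $g:[0,T]\to(0,\infty)$ continuous, $x_T\in\mathbb{R}^d$. For continuous $f,h:[0,T]\to\mathbb{R}$, $\mathbf{m}\in\mathbb{R}^d$ and $\gamma\in(0,\infty)$, let $$\mathbf{u}^*_{t,\gamma}(\mathbf{x})=g_te^{\bar f_{t:T}}\frac{x_T-e^{\bar f_{t:T}}\mathbf{x}-\mathbf{m}e^{\bar f_T}\bar h_{t:T}}{\gamma^{-1}+e^{2\bar f_T}\bar g^2_{t:T}}$$ and call the ''UniDB forward SDE with hyper-parameters $(f,h,\mathbf{m},\gamma\to\infty)$'' the SDE $d\mathbf{x}_t=(f_t\mathbf{x}_t+h_t\mathbf{m}+g_t\lim_{\gamma\to\infty}\mathbf{u}^*_{t,\gamma}(\mathbf{x}_t))dt+g_td\mathbf{w}_t$. Then: (i) (DDBMs (VE)) With $f_t=0$, $h_t=0$, this SDE equals $d\mathbf{x}_t=g_t^2\frac{x_T-\mathbf{x}_t}{\sigma_T^2-\sigma_t^2}dt+g_td\mathbf{w}_t$, where $\sigma_t^2$ satisfies $\frac{d}{dt}\sigma_t^2=g_t^2$. (ii) (DDBMs (VP)) With $f_t=-\frac12g_t^2$, $h_t=0$, this SDE equals $d\mathbf{x}_t=\Big(-\frac12g_t^2\mathbf{x}_t+g_t^2\frac{\frac{\alpha_t}{\alpha_T}x_T-\mathbf{x}_t}{\sigma_t^2(\mathrm{SNR}_t/\mathrm{SNR}_T-1)}\Big)dt+g_td\mathbf{w}_t$, where $\alpha_t=e^{-\frac12\int_0^tg_z^2dz}$,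 $\sigma_t^2=1-\alpha_t^2$ and $\mathrm{SNR}_t=\alpha_t^2/\sigma_t^2$. (iii) (GOUB) With $f_t=-\theta_t$, $h_t=\theta_t$, $\mathbf{m}=x_T$, where $\theta:[0,T]\to(0,\infty)$ is continuous and $g_t^2=2\lambda^2\theta_t$ for a constant $\lambda>0$, this SDE equals $d\mathbf{x}_t=\Big(\theta_t+g_t^2\frac{e^{-2\bar\theta_{t:T}}}{\bar\sigma^2_{t:T}}\Big)(x_T-\mathbf{x}_t)dt+g_td\mathbf{w}_t$, where $\bar\theta_{s:t}=\int_s^t\theta_zdz$ and $\bar\sigma^2_{s:t}=\lambda^2(1-e^{-2\bar\theta_{s:t}})$.
   Context: Notation: $\bar f_{s:t}=\int_s^tf_zdz$, $\bar f_t=\bar f_{0:t}$, $\bar h_{s:t}=\int_s^te^{-\bar f_z}h_zdz$, $\bar g^2_{s:t}=\int_s^te^{-2\bar f_z}g_z^2dz$; $\mathbf{w}_t$ is a standard Brownian motion; all identities are for $t\in[0,T)$. $\mathbf{u}^*_{t,\gamma}$ is the optimal feedback controller for minimizing $\int_0^T\frac12\|\mathbf{u}\|^2dt+\frac\gamma2\|\mathbf{x}^u_T-x_T\|^2$ under $d\mathbf{x}_t=(f_t\mathbf{x}_t+h_t\mathbf{m}+g_t\mathbf{u}_t)dt$. The three target SDEs are the forward processes of the DDBM (VE), DDBM (VP) and GOUB diffusion bridge models (obtained by Doob's $h$-transform). *)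

(* Defs.v *)
From HB Require Import structures.
From mathcomp Require Import all_boot all_order all_algebra.
From mathcomp Require Import all_classical all_reals all_analysis.
Set Implicit Arguments.
Unset Strict Implicit.
Unset Printing Implicit Defensive.
Import Order.TTheory GRing.Theory Num.Theory.
Import numFieldNormedType.Exports.
Local Open Scope classical_set_scope.
Local Open Scope ring_scope.

Section UniDB.
Variable R : realType.

Definition fbar (f : R -> R) (s t : R) : R :=
  (\int[@lebesgue_measure R]_(z in `[s, t]) f z)%R.

Definition hbar (f h : R -> R) (s t : R) : R :=
  (\int[@lebesgue_measure R]_(z in `[s, t]) (expR (- fbar f 0 z) * h z))%R.

Definition g2bar (f g : R -> R) (s t : R) : R :=
  (\int[@lebesgue_measure R]_(z in `[s, t]) (expR (- (2 * fbar f 0 z)) * g z ^+ 2))%R.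

Definition ustar (d : nat) (T : R) (f h g : R -> R) (m xT : 'rV[R]_d)
    (gamma t : R) (x : 'rV[R]_d) : 'rV[R]_d :=
  (g t * expR (fbar f t T) / (gamma^-1 + expR (2 * fbar f 0 T) * g2bar f g t T))
    *: (xT - expR (fbar f t T) *: x - (expR (fbar f 0 T) * hbar f h t T) *: m).

Definition unidb_drift (d : nat) (T : R) (f h g : R -> R) (m xT : 'rV[R]_d)
    (gamma t : R) (x : 'rV[R]_d) : 'rV[R]_d :=
  f t *: x + h t *: m + g t *: ustar T f h g m xT gamma t x.

Definition alphaVP (g : R -> R) (t : R) : R :=
  expR (- (1 / 2) * (\int[@lebesgue_measure R]_(z in `[0, t]) (g z ^+ 2))%R).
Definition sigma2VP (g : R -> R) (t : R) : R := 1 - alphaVP g t ^+ 2.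
Definition SNR (g : R -> R) (t : R) : R := alphaVP g t ^+ 2 / sigma2VP g t.

End UniDB.

(* Main.v *)
Require Import Defs.
From HB Require Import structures.
From mathcomp Require Import all_boot all_order all_algebra.
From mathcomp Require Import all_classical all_reals all_analysis.
From mathcomp Require Import ring lra.
Import Order.TTheory GRing.Theory Num.Theory.
Import numFieldNormedType.Exports.
Local Open Scope classical_set_scope.
Local Open Scope ring_scope.

Section H.
Variable R : realType.
Local Notation mu := (@lebesgue_measure R).


Lemma FTC_R (f F : R -> R) a b : a < b -> {within `[a,b], continuous f} ->
  {within `[a,b], continuous F} ->
  (forall x, a < x < b -> is_derive x 1 F (f x)) ->
  \int[mu]_(x in `[a,b]) f x = F b - F a.
Proof.
move=> ab cf cF dF.
rewrite /Rintegral (@continuous_FTC2 _ f F _ _ ab cf) //=.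
  have [_ Fa Fb] := (continuous_within_itvP _ ab).1 cF.
  split=> //.
  move=> x; rewrite in_itv /= => xab.
  by have := dF x xab => -[].
move=> x; rewrite in_itv /= => xab.
by have := dF x xab => -[_ <-]; rewrite derive1E.
Qed.

Lemma PhiD {f : R -> R} {T x : R} : {within `[0,T], continuous f} -> 0 < x < T ->
  is_derive x 1 (fun z => \int[mu]_(t in `[0,z]) f t) (f x).
Proof.
move=> cf /andP[x0 xT].
have ab : 0 < T by apply: lt_trans xT.
have fi : mu.-integrable `[0, T] (EFin \o f).
  by apply: continuous_compact_integrable => //; exact: segment_compact.
have cx : {for x, continuous f}.
  by apply: (within_continuous_continuous ab cf); rewrite in_itv /= x0 xT.
have [dx ex] := continuous_FTC1_closed xT fi x0 cx.
by rewrite -ex derive1E; apply: derivableP.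
Qed.

Lemma PhiC {f : R -> R} {T : R} : 0 <= T -> {within `[0,T], continuous f} ->
  {within `[0,T], continuous (fun z => \int[mu]_(t in `[0,z]) f t)}.
Proof.
move=> T0 cf.
have fi : mu.-integrable `[0, T] (EFin \o f).
  by apply: continuous_compact_integrable => //; exact: segment_compact.
exact: (parameterized_integral_continuous T0 fi).
Qed.



Lemma wcM {A : set R} {f g : R -> R} : {within A, continuous f} -> {within A, continuous g} ->
  {within A, continuous (fun z => f z * g z)}.
Proof. move=> cf cg x. apply: continuousM; [exact: cf|exact: cg]. Qed.

Lemma wcN {A : set R} {f : R -> R} k : {within A, continuous f} ->
  {within A, continuous (fun z => k * f z)}.
Proof. move=> cf x; apply: continuousM; [exact: cvg_cst|exact: cf]. Qed.

Lemma wcE {A : set R} {f : R -> R} k : {within A, continuous f} ->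
  {within A, continuous (fun z => expR (k * f z))}.
Proof.
move=> cf x. have h1 := @wcN A f k cf x. have h2 := @continuous_expR R (k * f x). exact: (continuous_comp h1 h2).
Qed.

Lemma wcX {A : set R} {f : R -> R} : {within A, continuous f} ->
  {within A, continuous (fun z => f z ^+ 2)}.
Proof. move=> cf; rewrite /GRing.exp /=; exact: (@wcM A f f cf cf). Qed.

Lemma wsub {f : R -> R} {a b c : R} : a <= b -> {within `[a,c], continuous f} -> {within `[b,c], continuous f}.
Proof.
move=> ab; apply: continuous_subspaceW.
by apply: subset_itvr; rewrite bnd_simp.
Qed.



Lemma lim_drift d (A B V : 'rV[R]_d) c e D : D != 0 ->
  (A + B + c *: ((e / (gamma^-1 + D)) *: V)) @[gamma --> +oo] --> A + B + c *: ((e / D) *: V).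
Proof.
move=> D0.
have h0 : (fun gamma : R => gamma^-1) @ +oo --> (0:R).
  apply/gtr0_cvgV0; first by near=> y.
  exact: cvg_id.
have h1 : (fun gamma : R => e / (gamma^-1 + D)) @ +oo --> e / D.
  apply: cvgM; first exact: cvg_cst.
  have hh : (fun gamma : R => gamma^-1 + D) @ +oo --> D.
    by rewrite -[X in _ --> X](add0r D); apply: cvgD => //; exact: cvg_cst.
  exact: (cvgV D0 hh).
apply: cvgD; first exact: cvg_cst.
apply: cvgZ; first exact: cvg_cst.
apply: cvgZ => //; exact: cvg_cst.
Unshelve. all: by end_near.
Qed.


Lemma fbar_split (f : R -> R) T t : {within `[0,T], continuous f} -> 0 <= t < T ->
  fbar f t T = fbar f 0 T - fbar f 0 t.
Proof.
move=> cf /andP[t0 tT].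
rewrite /fbar; apply: (@FTC_R f (fun z => \int[mu]_(x in `[0,z]) f x)) => //.
- exact: wsub cf.
- have T0 : 0 <= T by apply: ltW; apply: le_lt_trans tT.
  exact: (wsub t0 (PhiC T0 cf)).
- move=> x /andP[tx xT]; apply: (PhiD cf).
  by rewrite xT (le_lt_trans t0 tx).
Qed.

Lemma incr (F f : R -> R) a b : a < b -> {within `[a,b], continuous F} ->
  (forall x, a < x < b -> is_derive x 1 F (f x)) -> (forall x, a < x < b -> 0 < f x) ->
  F a < F b.
Proof.
move=> ab cF dF pf.
have dF' : forall x, x \in `]a, b[ -> is_derive x 1 F (f x).
  by move=> x; rewrite in_itv /=; exact: dF.
have [c] := MVT ab dF' cF.
rewrite in_itv /= => cab e.
by rewrite -subr_gt0 e mulr_gt0 // ?subr_gt0 // pf.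
Qed.

Lemma dexp (f : R -> R) T k x : {within `[0,T], continuous f} -> 0 < x < T ->
  is_derive x 1 (fun z => expR (k * fbar f 0 z)) (expR (k * fbar f 0 x) * (k * f x)).
Proof.
move=> cf hx.
have h1 : is_derive x 1 (fun z => k * fbar f 0 z) (k * f x).
  have := @is_deriveZ R R R (fun z => fbar f 0 z) k x 1 (f x) (PhiD cf hx).
  done.
exact: (@is_derive1_comp R expR (fun z => k * fbar f 0 z) x _ _ (is_derive_expR _) h1).
Qed.

Lemma int_exp (f q : R -> R) T k t : {within `[0,T], continuous f} ->
  {within `[0,T], continuous q} -> 0 <= t < T ->
  (forall x, 0 < x < T -> q x = k * f x) ->
  \int[mu]_(z in `[t,T]) (expR (k * fbar f 0 z) * q z) =
    expR (k * fbar f 0 T) - expR (k * fbar f 0 t).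
Proof.
move=> cf cq /andP[t0 tT] qf.
have T0 : 0 <= T by apply: ltW; apply: le_lt_trans tT.
have cP := PhiC T0 cf.
apply: (@FTC_R _ (fun z => expR (k * fbar f 0 z))) => //.
- apply: (wsub t0); apply: wcM => //; exact: wcE.
- apply: (wsub t0); exact: wcE.
- move=> x /andP[tx xT].
  have hx : 0 < x < T by rewrite xT (le_lt_trans t0 tx).
  by rewrite qf //; apply: dexp.
Qed.


Lemma lim_drift' d (A B V Y : 'rV[R]_d) c e D : D != 0 ->
  A + B + c *: ((e / D) *: V) = Y ->
  (A + B + c *: ((e / (gamma^-1 + D)) *: V)) @[gamma --> +oo] --> Y.
Proof. by move=> D0 <-; exact: lim_drift. Qed.

Lemma fbar0 a b : fbar (fun=> (0:R)) a b = 0.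
Proof. by rewrite /fbar Rintegral_cst // mul0r. Qed.

Lemma hbar0 f a b : hbar f (fun=> (0:R)) a b = 0.
Proof.
rewrite /hbar (@eq_Rintegral _ _ _ mu _ (fun=> 0)); first by rewrite Rintegral_cst // mul0r.
by move=> z _; rewrite mulr0.
Qed.

Lemma part1 d (T : R) (g : R -> R) (xT : 'rV[R]_d) :
  0 < T ->
  {within `[0, T], continuous g} ->
  (forall t, 0 <= t <= T -> 0 < g t) ->
  (forall (m : 'rV[R]_d) (sigma2 : R -> R),
      {within `[0, T], continuous sigma2} ->
      (forall t, 0 < t < T -> is_derive t 1 sigma2 (g t ^+ 2)) ->
      forall t, 0 <= t < T -> forall x : 'rV[R]_d,
        unidb_drift T (fun=> 0) (fun=> 0) g m xT gamma t x @[gamma --> +oo] -->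
        (g t ^+ 2 / (sigma2 T - sigma2 t)) *: (xT - x)).
Proof.
move=> T0 cg gp m s2 cs ds t /andP[t0 tT] x.
have G : g2bar (fun=> 0) g t T = s2 T - s2 t.
  rewrite /g2bar (@eq_Rintegral _ _ _ mu _ (fun z => g z ^+ 2)); last first.
    by move=> z _; rewrite fbar0 mulr0 oppr0 expR0 mul1r.
  apply: FTC_R => //.
  - exact: (wsub t0 (wcX cg)).
  - exact: (wsub t0 cs).
  - move=> y /andP[ty yT]; apply: ds; by rewrite yT (le_lt_trans t0 ty).
have S0 : s2 t < s2 T.
  apply: (@incr s2 (fun z => g z ^+ 2)) => //.
  - exact: (wsub t0 cs).
  - move=> y /andP[ty yT]; apply: ds; by rewrite yT (le_lt_trans t0 ty).
  - move=> y /andP[ty yT]; apply: exprn_gt0; apply: gp.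
    by rewrite (ltW yT) (le_trans t0 (ltW ty)).
have gt0 : 0 < g t by apply: gp; rewrite t0 ltW.
rewrite /unidb_drift /ustar.
apply: lim_drift'.
  by rewrite G !fbar0 mulr0 expR0 mul1r subr_eq0 gt_eqF.
rewrite G hbar0 !fbar0 mulr0 !expR0.
apply/rowP => i; rewrite !mxE.
have : s2 T - s2 t != 0 by rewrite subr_eq0 gt_eqF.
move=> h; field; done.
Qed.


Lemma fbarZ (f : R -> R) k z : {within `[0, z], continuous f} -> 0 <= z ->
  fbar (fun u => k * f u) 0 z = k * fbar f 0 z.
Proof.
move=> cf z0; rewrite /fbar RintegralZl //.
by apply: continuous_compact_integrable => //; exact: segment_compact.
Qed.

Lemma wsubr {f : R -> R} {a b c : R} : b <= c -> {within `[a,c], continuous f} -> {within `[a,b], continuous f}.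
Proof.
move=> bc; apply: continuous_subspaceW.
by apply: subset_itvl; rewrite bnd_simp.
Qed.

Lemma fbar00 (f : R -> R) : fbar f 0 0 = 0.
Proof. by rewrite /fbar set_itv1 Rintegral_set1. Qed.

Lemma Ppos (f : R -> R) T a b : {within `[0, T], continuous f} ->
  (forall t, 0 <= t <= T -> 0 < f t) -> 0 <= a -> a < b -> b <= T ->
  fbar f 0 a < fbar f 0 b.
Proof.
move=> cf fp a0 ab bT.
have T0 : 0 <= T by apply: le_trans bT; apply: ltW; apply: le_lt_trans ab.
apply: (@incr (fun z => fbar f 0 z) f) => //.
- exact: (wsub a0 (wsubr bT (PhiC T0 cf))).
- move=> y /andP[ay yb]; apply: (PhiD cf).
  by rewrite (lt_le_trans yb bT) (le_lt_trans a0 ay).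
- move=> y /andP[ay yb]; apply: fp.
  by rewrite (ltW (le_lt_trans a0 ay)) (ltW (lt_le_trans yb bT)).
Qed.

Lemma alg2 (E1 E2 c X Y M : R) : 0 < E2 -> E2 < E1 -> E1 < 1 ->
  - (1 / 2) * c ^+ 2 * X + 0 * M +
  c * (c * (E2 / E1) / (E2 * E2 * ((E2 * E2)^-1 - (E1 * E1)^-1)) *
   (Y - E2 / E1 * X - E2 * 0 * M)) =
  - (1 / 2) * c ^+ 2 * X +
  c ^+ 2 / ((1 - E1 ^+ 2) * (E1 ^+ 2 / (1 - E1 ^+ 2) / (E2 ^+ 2 / (1 - E2 ^+ 2)) - 1)) *
  (E1 / E2 * Y - X).
Proof.
move=> E2p E21 E1lt.
have E1p : 0 < E1 by apply: lt_trans E21.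
have h1 : E1 != 0 by rewrite gt_eqF.
have h2 : E2 != 0 by rewrite gt_eqF.
have h3 : 1 - E1 ^+ 2 != 0 by rewrite gt_eqF // subr_gt0 expr_lt1 // ltW.
have E2lt : E2 < 1 by apply: lt_trans E21 E1lt.
have h4 : 1 - E2 ^+ 2 != 0 by rewrite gt_eqF // subr_gt0 expr_lt1 // ltW.
have h5 : E1 ^+ 2 - E2 ^+ 2 != 0 by rewrite gt_eqF //; nra.
field.
rewrite h1 h2 h3 h4 /= andbT.
by rewrite (_ : E1 ^+ 2 * _ + _ = E1 ^+ 2 - E2 ^+ 2) //; ring.
Qed.

Lemma part2 d (T : R) (g : R -> R) (xT : 'rV[R]_d) :
  0 < T ->
  {within `[0, T], continuous g} ->
  (forall t, 0 <= t <= T -> 0 < g t) ->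
  (forall (m : 'rV[R]_d) t, 0 < t < T -> forall x : 'rV[R]_d,
        unidb_drift T (fun z => - (1 / 2) * g z ^+ 2) (fun=> 0) g m xT gamma t x
          @[gamma --> +oo] -->
        (- (1 / 2) * g t ^+ 2) *: x
        + (g t ^+ 2 / (sigma2VP g t * (SNR g t / SNR g T - 1)))
          *: ((alphaVP g t / alphaVP g T) *: xT - x)).
Proof.
move=> T0 cg gp m t /andP[t0 tT] x.
set q := fun z => g z ^+ 2.
have cq : {within `[0, T], continuous q} by exact: wcX cg.
have qp : forall z, 0 <= z <= T -> 0 < q z.
  by move=> z hz; rewrite /q exprn_gt0 // gp.
set f := fun z => - (1 / 2) * q z.
have cf : {within `[0, T], continuous f} by exact: wcN.
set P := fun z => fbar q 0 z.
have fP : forall z, 0 <= z <= T -> fbar f 0 z = - (1 / 2) * P z.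
  move=> z /andP[z0 zT]; rewrite /f fbarZ //; exact: (wsubr zT cq).
have t0' : 0 <= t < T by rewrite tT ltW.
have T0' : 0 <= T <= T by rewrite lexx ltW.
have t0'' : 0 <= t <= T by rewrite !ltW.
have fs := fbar_split _ _ _ cf t0'.
have G : g2bar f g t T = expR (1 * P T) - expR (1 * P t).
  rewrite /g2bar (@eq_Rintegral _ _ _ mu _ (fun z => expR (1 * fbar q 0 z) * q z)).
    by apply: int_exp => // y _; rewrite mul1r.
  move=> z; rewrite inE /= in_itv /= => /andP[tz zT].
  rewrite fP ?zT ?(le_trans (ltW t0) tz) //; congr (expR _ * _).
  by rewrite /P; field.
have Pt : 0 < P t.
  by have := Ppos _ _ 0 t cq qp (lexx 0) t0 (ltW tT); rewrite fbar00.
have PT : P t < P T by exact: (Ppos _ _ t T cq qp (ltW t0) tT (lexx T)).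
have aE : forall z, alphaVP g z = expR (- (1 / 2) * P z) by [].
rewrite /unidb_drift /ustar.
apply: lim_drift'.
  rewrite G mulf_neq0 // ?gt_eqF ?expR_gt0 // subr_gt0 ltr_expR ltr_pM2l //.
rewrite G hbar0 fs !fP // /SNR /sigma2VP !aE.
set a := P t; set b := P T.
rewrite expRB.
rewrite (_ : 2 * (- (1 / 2) * b) = - (1 / 2) * b + - (1 / 2) * b); last by field.
rewrite (_ : 1 * b = - (- (1 / 2) * b + - (1 / 2) * b)); last by field.
rewrite (_ : 1 * a = - (- (1 / 2) * a + - (1 / 2) * a)); last by field.
rewrite !expRN !expRD.
have E1lt : expR (- (1 / 2) * a) < 1.
  by rewrite expR_lt1 mulNr oppr_lt0 mulr_gt0.
have E21 : expR (- (1 / 2) * b) < expR (- (1 / 2) * a).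
  by rewrite ltr_expR !mulNr ltrN2 ltr_pM2l.
have E2p := expR_gt0 (- (1 / 2) * b).
have E1p := expR_gt0 (- (1 / 2) * a).
rewrite /f /q.
apply/rowP => i; rewrite !mxE.
by apply: alg2 => //; exact: expR_gt0.
Qed.


Lemma int_expc (f q : R -> R) T k c t : {within `[0,T], continuous f} ->
  {within `[0,T], continuous q} -> 0 <= t < T ->
  (forall x, 0 < x < T -> q x = c * (k * f x)) ->
  \int[mu]_(z in `[t,T]) (expR (k * fbar f 0 z) * q z) =
    c * (expR (k * fbar f 0 T) - expR (k * fbar f 0 t)).
Proof.
move=> cf cq /andP[t0 tT] qf.
have T0 : 0 <= T by apply: ltW; apply: le_lt_trans tT.
have cP := PhiC T0 cf.
rewrite mulrBr.
apply: (@FTC_R _ (fun z => c * expR (k * fbar f 0 z))) => //.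
- apply: (wsub t0); apply: wcM => //; exact: wcE.
- apply: (wsub t0); apply: wcN; exact: wcE.
- move=> x /andP[tx xT].
  have hx : 0 < x < T by rewrite xT (le_lt_trans t0 tx).
  rewrite qf // (mulrC c) mulrA (mulrC _ c).
  have := @is_deriveZ R R R (fun z => expR (k * fbar f 0 z)) c x 1 _ (dexp _ _ k _ cf hx).
  done.
Qed.

Lemma fbarN (f : R -> R) z : {within `[0, z], continuous f} -> 0 <= z ->
  fbar (fun u => -1 * f u) 0 z = - fbar f 0 z.
Proof. by move=> cf z0; rewrite fbarZ // mulN1r. Qed.

Lemma alg3 (A B c th l X Y : R) : A < B -> 0 < l -> c ^+ 2 = 2 * l ^+ 2 * th ->
  -1 * th * X + th * Y +
  c * (c * expR (- B - - A) / (expR (2 * - B) * (l ^+ 2 * (expR (2 * B) - expR (2 * A)))) *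
   (Y - expR (- B - - A) * X - expR (- B) * (1 * (expR (1 * B) - expR (1 * A))) * Y)) =
  (th + 2 * l ^+ 2 * th * expR (- (2 * (B - A))) /
   (l ^+ 2 * (1 - expR (- (2 * (B - A)))))) * (Y - X).
Proof.
move=> AB l0 hc.
have -> : forall E D V : R, c * (c * E / D * V) = c ^+ 2 * (E / D * V).
  by move=> *; ring.
rewrite hc.
rewrite (_ : - B - - A = A - B); last by ring.
rewrite (_ : 2 * - B = - (B + B)); last by ring.
rewrite (_ : 2 * B = B + B); last by ring.
rewrite (_ : 2 * A = A + A); last by ring.
rewrite (_ : - (2 * (B - A)) = (A + A) - (B + B)); last by ring.
rewrite !mul1r !expRB !expRN !expRD.
have up := expR_gt0 A; have vp := expR_gt0 B.
have uv : expR A < expR B by rewrite ltr_expR.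
move: up vp uv; move: (expR A) (expR B) => u v up vp uv.
have h1 : u != 0 by rewrite gt_eqF.
have h2 : v != 0 by rewrite gt_eqF.
have h3 : l != 0 by rewrite gt_eqF.
have h4 : v * v - u * u != 0 by rewrite gt_eqF //; nra.
field.
by rewrite h2 h4 h3.
Qed.

Lemma part3 d (T : R) (g : R -> R) (xT : 'rV[R]_d) :
  0 < T ->
  {within `[0, T], continuous g} ->
  (forall t, 0 <= t <= T -> 0 < g t) ->
  (forall (theta : R -> R) (lambda : R),
      {within `[0, T], continuous theta} ->
      (forall t, 0 <= t <= T -> 0 < theta t) ->
      0 < lambda ->
      (forall t, 0 <= t <= T -> g t ^+ 2 = 2 * lambda ^+ 2 * theta t) ->
      forall t, 0 <= t < T -> forall x : 'rV[R]_d,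
        unidb_drift T (fun z => - theta z) theta g xT xT gamma t x
          @[gamma --> +oo] -->
        (theta t + g t ^+ 2 * expR (- (2 * fbar theta t T))
                     / (lambda ^+ 2 * (1 - expR (- (2 * fbar theta t T)))))
          *: (xT - x)).
Proof.
move=> T0 cg gp th la cth thp la0 gth t tT' x.
have fE : (fun z => - th z) = (fun z => -1 * th z).
  by apply/funext => z; rewrite mulN1r.
rewrite fE.
set f := fun z => -1 * th z.
have cf : {within `[0, T], continuous f} by exact: wcN.
have fP : forall z, 0 <= z <= T -> fbar f 0 z = - fbar th 0 z.
  move=> z /andP[z0 zT]; rewrite /f fbarN //; exact: (wsubr zT cth).
have /andP[t0 tT] := tT'.
have T0' : 0 <= T <= T by rewrite lexx ltW.
have t0'' : 0 <= t <= T by rewrite t0 ltW.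
have fs := fbar_split _ _ _ cf tT'.
have ths := fbar_split _ _ _ cth tT'.
have cq : {within `[0, T], continuous (fun z => g z ^+ 2)} by exact: wcX cg.
have Hb : hbar f th t T = 1 * (expR (1 * fbar th 0 T) - expR (1 * fbar th 0 t)).
  rewrite /hbar (@eq_Rintegral _ _ _ mu _ (fun z => expR (1 * fbar th 0 z) * th z)).
    by apply: int_expc => // y _; rewrite !mul1r.
  move=> z; rewrite inE /= in_itv /= => /andP[tz zT].
  by rewrite fP ?zT ?(le_trans t0 tz) // opprK mul1r.
have G : g2bar f g t T = la ^+ 2 * (expR (2 * fbar th 0 T) - expR (2 * fbar th 0 t)).
  rewrite /g2bar (@eq_Rintegral _ _ _ mu _ (fun z => expR (2 * fbar th 0 z) * g z ^+ 2)).
    apply: int_expc => // y /andP[y0 yT]; rewrite gth; last by rewrite !ltW.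
    ring.
  move=> z; rewrite inE /= in_itv /= => /andP[tz zT].
  by rewrite fP ?zT ?(le_trans t0 tz) // mulrN opprK.
have PT : fbar th 0 t < fbar th 0 T by exact: (Ppos _ _ t T cth thp t0 tT (lexx T)).
rewrite /unidb_drift /ustar.
apply: lim_drift'.
  rewrite G mulf_neq0 // ?gt_eqF ?expR_gt0 // mulr_gt0 ?exprn_gt0 // subr_gt0 ltr_expR ltr_pM2l //.
rewrite G Hb fs ths !fP // gth //.
rewrite /f.
apply/rowP => i; rewrite !mxE.
by apply: alg3 => //; apply: gth.
Qed.


End H.

Theorem proposition4p4 (R : realType) (d : nat) (T : R) (g : R -> R)
    (xT : 'rV[R]_d) :
  0 < T ->
  {within `[0, T], continuous g} ->
  (forall t, 0 <= t <= T -> 0 < g t) ->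
  (forall (m : 'rV[R]_d) (sigma2 : R -> R),
      {within `[0, T], continuous sigma2} ->
      (forall t, 0 < t < T -> is_derive t 1 sigma2 (g t ^+ 2)) ->
      forall t, 0 <= t < T -> forall x : 'rV[R]_d,
        unidb_drift T (fun=> 0) (fun=> 0) g m xT gamma t x @[gamma --> +oo] -->
        (g t ^+ 2 / (sigma2 T - sigma2 t)) *: (xT - x)) /\
  (forall (m : 'rV[R]_d) t, 0 < t < T -> forall x : 'rV[R]_d,
        unidb_drift T (fun z => - (1 / 2) * g z ^+ 2) (fun=> 0) g m xT gamma t x
          @[gamma --> +oo] -->
        (- (1 / 2) * g t ^+ 2) *: x
        + (g t ^+ 2 / (sigma2VP g t * (SNR g t / SNR g T - 1)))
          *: ((alphaVP g t / alphaVP g T) *: xT - x)) /\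
  (forall (theta : R -> R) (lambda : R),
      {within `[0, T], continuous theta} ->
      (forall t, 0 <= t <= T -> 0 < theta t) ->
      0 < lambda ->
      (forall t, 0 <= t <= T -> g t ^+ 2 = 2 * lambda ^+ 2 * theta t) ->
      forall t, 0 <= t < T -> forall x : 'rV[R]_d,
        unidb_drift T (fun z => - theta z) theta g xT xT gamma t x
          @[gamma --> +oo] -->
        (theta t + g t ^+ 2 * expR (- (2 * fbar theta t T))
                     / (lambda ^+ 2 * (1 - expR (- (2 * fbar theta t T)))))
          *: (xT - x)).
Proof.
move=> T0 cg gp; split; first exact: part1.
split; first exact: part2.
exact: part3.
Qed.
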